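(* Let $\mathcal H_{\rm R}$ be the Hilbert space of a single quantum harmonic oscillator with annihilation and creation operators $a,a^\dagger$, $[a,a^\dagger]=\mathbb 1$, let $h_{\rm R}=\Omega_{\rm R}a^\dagger a$ with $\Omega_{\rm R}>0$, and let $v_2=\nu a^\dagger a$ with $\nu\in\mathbb R$. Let $\omega_{\rm R}$ be a state on $\mathcal H_{\rm R}$ such that $\omega_{\rm R}\big((a^\dagger a)^k\big)\le c^k$ for all $k\in\mathbb N$, for some constant $c$, and let $\omega_{{\rm R},M}=\omega_{\rm R}^{\otimes M}$. Set $\overline V_{{\rm R},M}(t)=\frac1M\sum_{m=1}^M\big(e^{ith_{\rm R}}v_2e^{-ith_{\rm R}}\big)^{[m]}$. Then for all $n\in\mathbb N$ and $t_1,\dots,t_n\ge0$, $$\sup_{M\in\mathbb N}\big|\omega_{{\rm R},M}\big(\overline V_{{\rm R},M}(t_1)\cdots\overline V_{{\rm R},M}(t_n)\big)\big|\le (c|\nu|)^n.$$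
   Context: $X^{[m]}$ denotes the operator on $\mathcal H_{\rm R}^{\otimes M}$ acting as $X$ on the $m$-th factor and trivially elsewhere; $\omega_{\rm R}^{\otimes M}$ is the $M$-fold product state. *)

(* Defs.v *)
From HB Require Import structures.
From mathcomp Require Import all_boot all_order all_algebra.
From mathcomp Require Import complex.
From mathcomp Require Import all_classical all_reals all_analysis.
Set Implicit Arguments. Unset Strict Implicit. Unset Printing Implicit Defensive.
Import Order.TTheory GRing.Theory Num.Theory.
Import numFieldNormedType.Exports.
Local Open Scope classical_set_scope.
Local Open Scope ring_scope.

(* Operators on a Hilbert space l^2(I) with a countable orthonormal basis    *)
(* (e_i)_{i : I}, restricted to the dense invariant domain of finitely       *)
(* supported vectors.  An operator is given by its columns: [A j] is the     *)
(* finite formal combination  A e_j = sum_{(i,x) in A j} x e_i.              *)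
(* Every operator appearing in the statement (polynomials in a, a^dagger,    *)
(* the free evolution e^{ith}, and their tensor embeddings) preserves this   *)
(* domain.                                                                   *)
Definition op (I : Type) (C : Type) := I -> seq (I * C).

Section Ops.
Variables (I : eqType) (C : pzRingType).
Definition opid : op I C := fun j => [:: (j, 1)].
Definition opzero : op I C := fun _ => [::].
Definition opadd (A B : op I C) : op I C := fun j => A j ++ B j.
Definition opscale (s : C) (A : op I C) : op I C :=
  fun j => [seq (p.1, s * p.2) | p <- A j].
Definition opmul (A B : op I C) : op I C :=
  fun j => flatten [seq [seq (p.1, p.2 * q.2) | p <- A q.1] | q <- B j].
Definition opexp (A : op I C) (k : nat) : op I C := iter k (opmul A) opid.
Definition entry (A : op I C) (i j : I) : C := \sum_(p <- A j | p.1 == i) p.2.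
End Ops.

Section Oscillator.
Variable R : realType.
Local Notation C := R[i].

(* single mode: basis e_n, n : nat (number basis) *)
Definition ann : op nat C := fun n => [:: (n.-1, (Num.sqrt (n%:R : R))%:C%C)].
Definition cre : op nat C := fun n => [:: (n.+1, (Num.sqrt (n.+1%:R : R))%:C%C)].
Definition numop : op nat C := opmul cre ann.

Definition expi (x : R) : C := Complex (cos x) (sin x).

(* Functional calculus e^{itH} for an operator H that is diagonal in the     *)
(* basis with real diagonal entries (as is h_R = Omega a^dagger a):          *)
(* e^{itH} e_j = e^{i t H_jj} e_j.                                           *)
Definition expi_diag (I : eqType) (t : R) (H : op I C) : op I C :=
  fun j => [:: (j, expi (t * complex.Re (entry H j j)))].

Definition heis (I : eqType) (t : R) (H X : op I C) : op I C :=
  opmul (opmul (expi_diag t H) X) (expi_diag (- t) H).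

(* M modes: basis indexed by occupation numbers j : 'I_M -> nat *)
Definition idx (M : nat) := {ffun 'I_M -> nat}.
Definition setidx M (j : idx M) (m : 'I_M) (k : nat) : idx M :=
  [ffun l => if l == m then k else j l].
(* X^{[m]} : X acting on the m-th factor, identity elsewhere *)
Definition embed M (m : 'I_M) (X : op nat C) : op (idx M) C :=
  fun j => [seq (setidx j m p.1, p.2) | p <- X (j m)].
Definition opsum (I : eqType) (s : seq (op I C)) : op I C := foldr (@opadd I C) (@opzero I C) s.

(* Density matrices (normal states) on l^2(nat): rho i j = <e_i, rho e_j>, *)
(* positive semidefinite, with trace 1.                                    *)
Definition is_density (rho : nat -> nat -> C) : Prop :=
  (forall x : seq (nat * C),
      0 <= \sum_(p <- x) \sum_(q <- x) (p.2)^* * rho p.1 q.1 * q.2) /\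
  ((fun K => \sum_(j < K) complex.Re (rho j j)) @ \oo --> (1 : R)).

Definition rho_prod M (rho : nat -> nat -> C) (i j : idx M) : C :=
  \prod_(m < M) rho (i m) (j m).

Definition box1 (K : nat) : seq nat := iota 0 K.
Definition boxM M (K : nat) : seq (idx M) :=
  [seq [ffun m => nat_of_ord (f m)] | f : {ffun 'I_M -> 'I_K} <- enum {ffun 'I_M -> 'I_K}].

(* omega(X) = Tr(rho X) = sum_j sum_i rho_{ji} X_{ij}, as the limit of sums   *)
(* over the finite exhaustion [box K] of the basis; [expect_is rho box X z]  *)
(* says that this trace exists and equals z.                               *)
Definition trace_partial (I : eqType) (rho : I -> I -> C) (box : nat -> seq I)
    (X : op I C) (K : nat) : C :=
  \sum_(j <- box K) \sum_(p <- X j) rho j p.1 * p.2.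
Definition expect_is (I : eqType) (rho : I -> I -> C) (box : nat -> seq I)
    (X : op I C) (z : C) : Prop :=
  ((fun K => complex.Re (trace_partial rho box X K)) @ \oo --> complex.Re z) /\
  ((fun K => complex.Im (trace_partial rho box X K)) @ \oo --> complex.Im z).

Arguments idx M : clear implicits.
Definition Vbar (Omega nu : R) (M : nat) (t : R) : op (idx M) C :=
  opscale ((M%:R : R)^-1)%:C%C
    (opsum [seq embed m (heis t (opscale Omega%:C%C numop) (opscale nu%:C%C numop))
           | m <- enum 'I_M]).

(* ordered product  A_0 A_1 ... A_{n-1} *)
Definition opprod (I : eqType) n (A : 'I_n -> op I C) : op I C :=
  foldr (@opmul I C) (@opid I C) [seq A k | k <- enum 'I_n].

End Oscillator.
Arguments Vbar [R] Omega nu M t _.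

(* Main.v *)
Require Import Defs.
From HB Require Import structures.
From mathcomp Require Import all_boot all_order all_algebra.
From mathcomp Require Import complex.
From mathcomp Require Import all_classical all_reals all_analysis.
Import Order.TTheory GRing.Theory Num.Theory.
Set Implicit Arguments. Unset Strict Implicit.
Import numFieldNormedType.Exports.
Local Open Scope classical_set_scope.
Local Open Scope ring_scope.

Section Diag.
Variable R : realType.
Local Notation C := R[i].

Definition diagop (I : eqType) (A : op I C) (f : I -> C) :=
  forall (g : I -> C) j, \sum_(p <- A j) g p.1 * p.2 = g j * f j.

Lemma diag_id (I : eqType) : diagop (@opid I C) (fun _ => 1).
Proof. by move=> g j; rewrite /opid big_seq1. Qed.

Lemma diag_mul (I : eqType) A B fa fb : diagop A fa -> diagop B fb ->
  @diagop I (opmul A B) (fun j => fa j * fb j).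
Proof.
move=> hA hB g j; rewrite /opmul big_flatten /= big_map.
have E q : \sum_(p <- [seq (p.1, p.2 * q.2) | p <- A q.1]) g p.1 * p.2 = g q.1 * fa q.1 * q.2.
  rewrite big_map /= -hA mulr_suml; apply: eq_bigr => p _; by rewrite mulrA.
under eq_bigr => q _ do rewrite E.
by rewrite (hB (fun i => g i * fa i)) mulrA.
Qed.

Lemma diag_zero (I : eqType) : diagop (@opzero I C) (fun _ => 0).
Proof. by move=> g j; rewrite big_nil mulr0. Qed.

Lemma diag_add (I : eqType) A B fa fb : diagop A fa -> diagop B fb ->
  @diagop I (opadd A B) (fun j => fa j + fb j).
Proof. by move=> hA hB g j; rewrite /opadd big_cat hA hB mulrDr. Qed.

Lemma diag_scale (I : eqType) s A fa : diagop A fa ->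
  @diagop I (opscale s A) (fun j => s * fa j).
Proof.
move=> hA g j; rewrite /opscale big_map /=.
under eq_bigr => p _ do rewrite mulrCA.
by rewrite -mulr_sumr hA mulrCA.
Qed.

Lemma diag_sum (I : eqType) (T : Type) (X : T -> op I C) F (s : seq T) :
  (forall x, diagop (X x) (F x)) ->
  diagop (opsum [seq X x | x <- s]) (fun j => \sum_(x <- s) F x j).
Proof.
move=> hX; elim: s => [|x s IH] /=.
  by move=> g j; rewrite big_nil /opsum /= big_nil mulr0.
move=> g j; rewrite /opsum /= -/(opsum _).
by rewrite (diag_add (hX x) IH) big_cons.
Qed.

Lemma diag_prod (I : eqType) n (A : 'I_n -> op I C) F :
  (forall k, diagop (A k) (F k)) ->
  diagop (opprod A) (fun j => \prod_(k <- enum 'I_n) F k j).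
Proof.
move=> hA; rewrite /opprod; elim: (enum 'I_n) => [|x s IH] /=.
  by move=> g j; rewrite big_nil; apply: diag_id.
by move=> g j; rewrite (diag_mul (hA x) IH) big_cons.
Qed.

Lemma diag_embed M (m : 'I_M) X f : diagop X f ->
  diagop (embed m X) (fun j => f (j m)).
Proof.
move=> hX g j; rewrite /embed big_map /=.
rewrite (hX (fun k => g (setidx j m k))); congr (g _ * _).
by apply/ffunP => l; rewrite ffunE; case: eqP => // ->.
Qed.

Lemma diag_expi (I : eqType) t (H : op I C) :
  diagop (expi_diag t H) (fun j => expi (t * complex.Re (entry H j j))).
Proof. by move=> g j; rewrite /expi_diag big_seq1. Qed.

Lemma expiN (x : R) : expi x * expi (- x) = 1.
Proof.
rewrite /expi cosN sinN; apply/eqP; rewrite eq_complex /=; apply/andP; split; apply/eqP.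
  by rewrite mulrN opprK -!expr2 cos2Dsin2.
by rewrite mulrN mulrC addrC subrr.
Qed.

Lemma diag_heis (I : eqType) t (H X : op I C) f : diagop X f ->
  diagop (heis t H X) f.
Proof.
move=> hX g j.
rewrite /heis (diag_mul (diag_mul (diag_expi t H) hX) (diag_expi (-t) H)).
by rewrite mulNr [_ * f j]mulrC -mulrA expiN mulr1.
Qed.

Lemma diag_num : diagop (numop R) (fun j => (j%:R : R)%:C%C).
Proof.
move=> g [|j]; rewrite /numop /opmul /ann /cre /= big_cons big_nil addr0 /=.
  by rewrite sqrtr0 !mulr0.
rewrite -rmorphM /= -expr2 sqr_sqrtr ?ler0n //.
Qed.
End Diag.
Section Anal.
Variable R : realType.

Lemma cvg_sumr (I : Type) (s : seq I) (u : I -> nat -> R) (l : I -> R) :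
  (forall i, u i @ \oo --> l i) ->
  (fun K => \sum_(i <- s) u i K) @ \oo --> \sum_(i <- s) l i.
Proof.
move=> h; elim: s => [|i s IH].
  rewrite big_nil; under eq_fun do rewrite big_nil; exact: cvg_cst.
rewrite big_cons; under eq_fun do rewrite big_cons.
exact: cvgD.
Qed.

Lemma cvg_prodr (I : Type) (s : seq I) (u : I -> nat -> R) (l : I -> R) :
  (forall i, u i @ \oo --> l i) ->
  (fun K => \prod_(i <- s) u i K) @ \oo --> \prod_(i <- s) l i.
Proof.
move=> h; elim: s => [|i s IH].
  rewrite big_nil; under eq_fun do rewrite big_nil; exact: cvg_cst.
rewrite big_cons; under eq_fun do rewrite big_cons.
exact: cvgM.
Qed.

Lemma prod_count n M (s : 'I_n -> 'I_M) (y : 'I_M -> R) :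
  \prod_(i < n) y (s i) = \prod_(m < M) y m ^+ #|[pred i | s i == m]|.
Proof.
rewrite (partition_big s predT) //=; apply: eq_bigr => m _.
rewrite (eq_bigr (fun=> y m)); last by move=> i /eqP ->.
by rewrite prodr_const.
Qed.

Lemma sum_count n M (s : 'I_n -> 'I_M) :
  (\sum_(m < M) #|[pred i | s i == m]|)%N = n.
Proof.
under eq_bigr do rewrite -sum1_card.
rewrite (exchange_big_dep predT) //=.
rewrite -[RHS]card_ord -sum1_card; apply: eq_bigr => i _.
rewrite (big_pred1 (s i)) // => m /=; exact: eq_sym.
Qed.

Definition amom (r : nat -> R) e K := \sum_(j < K) r j * (j%:R) ^+ e.

Lemma expand_S (r : nat -> R) n M K :
  \sum_(f : {ffun 'I_M -> 'I_K}) \prod_(m < M) r (f m) * (\sum_(m < M) ((f m : nat)%:R : R)) ^+ n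
  = \sum_(s : {ffun 'I_n -> 'I_M}) \prod_(m < M) amom r #|[pred i | s i == m]| K.
Proof.
have E (x : 'I_M -> R) : (\sum_(m < M) x m) ^+ n = \sum_(s : {ffun 'I_n -> 'I_M}) \prod_(i < n) x (s i).
  by rewrite -[in LHS](card_ord n) -prodr_const bigA_distr_bigA.
under eq_bigr => f _ do rewrite E mulr_sumr.
rewrite exchange_big /=; apply: eq_bigr => s _.
rewrite /amom bigA_distr_bigA /=; apply: eq_bigr => f _.
rewrite (prod_count s (fun m => ((f m : nat)%:R : R))) -big_split /=.
by [].
Qed.


Lemma main_anal (r : nat -> R) (A : nat -> R) (c : R) n M :
  (forall j, 0 <= r j) -> (forall e, amom r e @ \oo --> A e) ->
  (forall e, A e <= c ^+ e) ->
  exists L, (fun K => \sum_(f : {ffun 'I_M -> 'I_K}) \prod_(m < M) r (f m) *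
        (\sum_(m < M) ((f m : nat)%:R : R)) ^+ n) @ \oo --> L
    /\ 0 <= L /\ L <= (M%:R * c) ^+ n.
Proof.
move=> r0 hA hc.
have A0 e : 0 <= A e.
  apply: (cvgr_to_ge (hA e)); apply: nearW => K.
  by rewrite /amom sumr_ge0 // => j _; rewrite mulr_ge0 // exprn_ge0.
exists (\sum_(s : {ffun 'I_n -> 'I_M}) \prod_(m < M) A #|[pred i | s i == m]|).
split.
  under eq_fun do rewrite expand_S.
  apply: cvg_sumr => s; apply: cvg_prodr => m; exact: hA.
split.
  by rewrite sumr_ge0 // => s _; rewrite prodr_ge0.
apply: (@le_trans _ _ (\sum_(s : {ffun 'I_n -> 'I_M}) c ^+ n)).
  apply: ler_sum => s _.
  have -> : c ^+ n = \prod_(m < M) c ^+ #|[pred i | s i == m]|.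
    by rewrite prodrXr sum_count.
  apply: ler_prod => m _.
  by rewrite A0 hc.
by rewrite sumr_const card_ffun !card_ord exprMn -[in X in _ <= X]natrX mulr_natl.
Qed.

End Anal.

Section Glue.
Variable R : realType.
Local Notation C := R[i].

Lemma diag_ext (I : eqType) (A : op I C) f f' : (forall j, f j = f' j) ->
  diagop A f -> diagop A f'.
Proof. by move=> e h g j; rewrite h e. Qed.

Lemma diag_opexp e : diagop (opexp (numop R) e) (fun j => ((j%:R : R) ^+ e)%:C%C).
Proof.
elim: e => [|e IH].
  by apply: diag_ext (@diag_id _ _) => j; rewrite expr0.
apply: diag_ext (diag_mul (@diag_num R) IH) => j.
by rewrite exprS rmorphM.
Qed.

Lemma diag_Vbar (Omega nu : R) M t :
  diagop (Vbar Omega nu M t)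
    (fun j => ((M%:R)^-1 * (nu * \sum_(m < M) ((j m)%:R : R)))%:C%C).
Proof.
apply: diag_ext (diag_scale _ (diag_sum _ (fun m => diag_embed m
   (diag_heis _ _ (diag_scale (nu%:C)%C (@diag_num R)))))) => j.
rewrite !rmorphM /= rmorph_sum big_enum /=; congr (_ * _).
by rewrite mulr_sumr; apply: eq_bigl => i.
Qed.


Lemma diag_opprod (Omega nu : R) M n (t : 'I_n -> R) :
  diagop (opprod (fun k => Vbar Omega nu M (t k)))
    (fun j => (((M%:R)^-1 * (nu * \sum_(m < M) ((j m)%:R : R))) ^+ n)%:C%C).
Proof.
apply: diag_ext (diag_prod (fun k => @diag_Vbar Omega nu M (t k))) => j.
by rewrite big_enum /= prodr_const card_ord rmorphXn.
Qed.

Lemma trace1 (rho : nat -> nat -> C) (r : nat -> R) e K :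
  (forall l, rho l l = (r l)%:C%C) ->
  trace_partial rho (@box1) (opexp (numop R) e) K = (amom r e K)%:C%C.
Proof.
move=> hr; rewrite /trace_partial /amom /box1.
under eq_bigr => j _ do rewrite (diag_opexp e (rho j)) hr -rmorphM.
rewrite -rmorph_sum; congr (_%:C)%C.
have -> : iota 0 K = index_iota 0 K by rewrite /index_iota subn0.
by rewrite big_mkord.
Qed.

Lemma traceM (rho : nat -> nat -> C) (r : nat -> R) Omega nu M n (t : 'I_n -> R) K :
  (forall l, rho l l = (r l)%:C%C) ->
  trace_partial (@rho_prod R M rho) (@boxM M) (opprod (fun k => Vbar Omega nu M (t k))) K
  = (((M%:R)^-1 * nu) ^+ n * \sum_(f : {ffun 'I_M -> 'I_K}) \prod_(m < M) r (f m) *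
        (\sum_(m < M) ((f m : nat)%:R : R)) ^+ n)%:C%C.
Proof.
move=> hr; rewrite /trace_partial /boxM big_map big_enum /=.
under eq_bigr => f _ do rewrite (@diag_opprod Omega nu M n t (rho_prod rho _)).
rewrite mulr_sumr rmorph_sum; apply: eq_big => // f _.
rewrite (eq_bigr (fun m => ((f m : nat)%:R : R))); last by move=> m _; rewrite ffunE.
rewrite /rho_prod.
have P : \prod_(m < M) rho (([ffun m0 => (f m0 : nat)] : idx M) m) (([ffun m0 => (f m0 : nat)] : idx M) m) = \prod_(m < M) (r (f m))%:C%C by apply: eq_bigr => m _; rewrite ffunE hr.
rewrite P.
rewrite -rmorph_prod -rmorphM; congr (_%:C)%C.
by rewrite mulrA exprMn mulrCA.
Qed.

End Glue.

Unset Implicit Arguments.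

Theorem proposition4 (R : realType) (Omega nu c : R) (rho : nat -> nat -> R[i])
  (hOmega : 0 < Omega)
  (hrho : is_density rho)
  (hmom : forall k : nat, exists z : R[i],
      expect_is rho (@box1) (opexp (numop R) k) z /\ z <= ((c ^+ k)%:C)%C) :
  forall (n : nat) (t : 'I_n -> R), (forall k, 0 <= t k) ->
  forall M : nat, (0 < M)%N ->
  exists z : R[i],
    expect_is (@rho_prod R M rho) (@boxM M)
      (opprod (fun k => Vbar Omega nu M (t k))) z /\
    Normc.normc z <= (c * `|nu|) ^+ n.
Proof.
move=> n t _ M M0.
pose r l := complex.Re (rho l l).
have hr l : rho l l = (r l)%:C%C /\ 0 <= r l.
  have := (hrho.1 [:: (l, 1)]).
  rewrite !big_seq1 /= mulr1 /r; case: (rho l l) => [a b]; rewrite lecE /= !mul1r oppr0 !mul0r subr0 addr0 => /andP [/eqP -> ha].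
  by split.
have [Z hZ] := choice hmom.
pose A e := complex.Re (Z e).
have hA e : amom r e @ \oo --> A e.
  have [[h1 _] _] := hZ e.
  have E : (fun K => complex.Re (trace_partial rho (@box1) (opexp (numop R) e) K)) = amom r e.
    by apply: funext => K; rewrite (trace1 e _ (fun l => (hr l).1)).
  by rewrite E in h1.
have hc e : A e <= c ^+ e.
  by have [_] := hZ e; rewrite lecE => /andP [_].
have [L [hL [L0 Lc]]] := main_anal n M (fun j => (hr j).2) hA hc.
exists ((((M%:R)^-1 * nu) ^+ n * L)%:C%C).
split; first split.
- under eq_fun do rewrite (@traceM R rho r Omega nu M n t _ (fun l => (hr l).1)) /=.
  exact: cvgMl_tmp.
- under eq_fun do rewrite (@traceM R rho r Omega nu M n t _ (fun l => (hr l).1)) /=.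
  exact: cvg_cst.
rewrite /Normc.normc /= expr0n /= addr0 sqrtr_sqr normrM normrX.
rewrite (ger0_norm L0).
have Mp : (0 < (M%:R : R)) by rewrite ltr0n.
apply: (@le_trans _ _ (`|(M%:R)^-1 * nu| ^+ n * (M%:R * c) ^+ n)).
  by rewrite ler_wpM2l // exprn_ge0.
rewrite -exprMn normrM normfV normr_nat.
rewrite (_ : _ * _ * _ = c * `|nu|) //.
by rewrite -mulrA mulrCA mulKf ?gt_eqF // mulrC.
Qed.
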